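(* If $G$ is a finite graph that does not contain $K_{t,t}$ as a subgraph, then \[\deg(G)/(2t^2)<\mathrm{fw}_1(G)\le(\deg(G)+1)^t.\] Consequently, if $\mathcal C$ is a weakly sparse class of graphs, then $\sup_{G\in\mathcal C}\mathrm{fw}_1(G)<\infty$ if and only if $\mathcal C$ has bounded degeneracy.
   Context: Graphs are finite, simple, undirected. $\deg(G)$ (degeneracy) is the least $d$ such that some total order of $V(G)$ has every vertex with at most $d$ earlier neighbours. A class is weakly sparse if there is $t$ such that no graph in it contains $K_{t,t}$ as a subgraph. A $k$-flip of $G$ is obtained by choosing a partition $\mathcal P$ of $V(G)$ with at most $k$ parts and, for some pairs $A,B$ of (possibly equal) parts, inverting adjacency of every pair of distinct $x\in A,y\in B$. Flipper game of radius $1$ and width $k$: $G_0=G$, runner chooses $v_0$; in round $i\ge1$ the flipper announces a $k$-flip $G_i$ of $G$, the runner moves from $v_{i-1}$ to $v_i$ equal or adjacent to $v_{i-1}$ in $G_{i-1}$; the flipper wins if $v_i$ is isolated in $G_i$. $\mathrm{fw}_1(G)$ is the least $k$ for which the flipper has a winning strategy. *)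

(* Defs.v *)
From mathcomp Require Import all_boot all_order all_algebra.
From mathcomp Require Import boolp.
Set Implicit Arguments. Unset Strict Implicit. Unset Printing Implicit Defensive.

Record sgraph := SGraph {
  vert :> finType;
  adj : rel vert;
  adj_sym : symmetric adj;
  adj_irr : irreflexive adj }.

Section Defs.
Variable G : sgraph.

Definition has_Ktt (t : nat) : bool :=
  [exists A : {set G}, exists B : {set G},
     [&& #|A| == t, #|B| == t, [disjoint A & B] &
         [forall a in A, forall b in B, adj a b]]].

(* Total orders of V(G) are encoded as bijections V(G) -> 'I_#|V(G)|
   (injective maps between sets of equal size); "u earlier than v" is f u < f v. *)
Definition degenerate_with (d : nat) : bool :=
  [exists f : {ffun G -> 'I_#|G|}, injectiveb f &&
     [forall v, #|[set u | adj v u & f u < f v]| <= d]].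

Lemma degenerate_with_ex : exists d, degenerate_with d.
Proof.
exists #|G|; apply/existsP; exists [ffun x => enum_rank x].
apply/andP; split.
  by apply/injectiveP => x y; rewrite !ffunE => /enum_rank_inj.
by apply/forallP => v; apply: max_card.
Qed.

Definition degeneracy : nat := ex_minn degenerate_with_ex.

(* A k-flip: partition into (at most) k parts, given by p : V -> 'I_k,
   and a set of (unordered, possibly equal) pairs of parts, given by F
   (the pair {A,B} is flipped iff F A B || F B A). *)
Definition flip_adj (k : nat) (p : G -> 'I_k) (F : rel 'I_k) : rel G :=
  fun x y => (x != y) && (adj x y (+) (F (p x) (p y) || F (p y) (p x))).

Definition isolated (H : rel G) (x : G) : Prop := forall y, ~~ H x y.

(* A flipper strategy: given the runner's positions v_0,...,v_{i-1},
   announce the k-flip G_i. *)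
Definition fstrategy (k : nat) := seq G -> ((G -> 'I_k) * rel 'I_k).

Definition round_graph (k : nat) (s : fstrategy k) (v : nat -> G) (i : nat)
  : rel G :=
  match i with
  | 0 => adj (s := G)
  | i'.+1 => let pf := s (mkseq v i) in flip_adj pf.1 pf.2
  end.

(* The flipper wins the radius-1 width-k flipper game on G: some strategy
   such that along every legal runner play there is a round i >= 1 where v_i
   is isolated in G_i.  (The runner may always stay put, so quantifying over
   infinite legal plays is the same as requiring the game to end.) *)
Definition flipper_wins (k : nat) : Prop :=
  exists s : fstrategy k, forall v : nat -> G,
    (forall i, v i.+1 = v i \/ round_graph s v i (v i) (v i.+1)) ->
    exists i, 0 < i /\ isolated (round_graph s v i) (v i).

Lemma flipper_wins_ex : exists k, `[< flipper_wins k >].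
Proof.
exists #|G|; apply/asboolP.
pose p := fun x : G => enum_rank x.
pose F := fun i j : 'I_#|G| => adj (enum_val i) (enum_val j).
exists (fun _ => (p, F)) => v _; exists 1; split => // y /=.
by rewrite /flip_adj /p /F !enum_rankK (@adj_sym G (v 1%N) y) orbb addbb andbF.
Qed.

Definition fw1 : nat := ex_minn flipper_wins_ex.

End Defs.

Definition weakly_sparse (C : sgraph -> Prop) : Prop :=
  exists t, forall G, C G -> ~~ has_Ktt G t.

Definition bounded_degeneracy (C : sgraph -> Prop) : Prop :=
  exists d, forall G, C G -> degeneracy G <= d.

Definition bounded_fw1 (C : sgraph -> Prop) : Prop :=
  exists k, forall G, C G -> fw1 G <= k.

(* Main.v *)
Require Import Defs.
From mathcomp Require Import all_boot all_order all_algebra.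
From mathcomp Require Import zify.
From mathcomp Require Import boolp.
From Stdlib Require Import Classical.

Set Implicit Arguments. Unset Strict Implicit. Unset Printing Implicit Defensive.


Lemma card_bigcup_le (T I : finType) (P : pred I) (F : I -> {set T}) :
  #|\bigcup_(i | P i) F i| <= \sum_(i | P i) #|F i|.
Proof.
apply: (big_rec2 (fun (X : {set T}) n => #|X| <= n)); first by rewrite cards0.
move=> i X n _ H; apply: leq_trans (leq_card_setU _ _) _; by rewrite leq_add2l.
Qed.

Lemma subset_card_eq (T : finType) (X : {set T}) n :
  n <= #|X| -> exists2 Y : {set T}, Y \subset X & #|Y| = n.
Proof.
move=> hn; exists [set x in take n (enum X)].
  by apply/subsetP => x; rewrite inE => /mem_take; rewrite mem_enum.
rewrite cardsE; move/card_uniqP: (take_uniq n (enum_uniq (mem X))) => ->.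
by rewrite size_take -cardE; case: ltngtP hn => // ->.
Qed.

Lemma Ktt_intro (G : sgraph) t (A B : {set G}) : #|A| = t -> #|B| = t ->
  [disjoint A & B] -> (forall a b, a \in A -> b \in B -> adj a b) -> has_Ktt G t.
Proof.
move=> hA hB hd hab; apply/existsP; exists A; apply/existsP; exists B.
rewrite hA hB hd !eqxx /=; apply/forallP => a; apply/implyP => ha.
by apply/forallP => b; apply/implyP => hb; apply: hab.
Qed.

Section Basic.
Variable G : sgraph.

Lemma deg_spec : degenerate_with G (degeneracy G) /\
  forall e, degenerate_with G e -> degeneracy G <= e.
Proof. by rewrite /degeneracy; case: ex_minnP. Qed.

Lemma deg_le_card : degeneracy G <= #|G|.
Proof.
apply: (proj2 deg_spec).
apply/existsP; exists [ffun x => enum_rank x].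
apply/andP; split.
  by apply/injectiveP => x y; rewrite !ffunE => /enum_rank_inj.
by apply/forallP => v; apply: max_card.
Qed.

Lemma fw1_spec : flipper_wins G (fw1 G) /\
  forall k, flipper_wins G k -> fw1 G <= k.
Proof.
rewrite /fw1; case: ex_minnP => m /asboolP hm hmin; split => // k hk.
by apply: hmin; apply/asboolP.
Qed.

Lemma fw1_le_card : fw1 G <= #|G|.
Proof.
apply: (proj2 fw1_spec).
pose p := fun x : G => enum_rank x.
pose F := fun i j : 'I_#|G| => adj (enum_val i) (enum_val j).
exists (fun _ => (p, F)) => v _; exists 1; split => // y /=.
by rewrite /flip_adj /p /F !enum_rankK (@adj_sym G (v 1%N) y) orbb addbb andbF.
Qed.

Lemma fw1_gt0 : 0 < #|G| -> 0 < fw1 G.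
Proof.
move=> /card_gt0P [x _]; case: fw1_spec; case: (fw1 G) => // [[s _]] _.
by case: ((s [::]).1 x).
Qed.

Lemma peel_order e :
  (forall S : {set G}, S != set0 ->
     exists2 v, v \in S & #|[set u in S | adj v u]| <= e) ->
  degenerate_with G e.
Proof.
move=> hS.
have main : forall n (S : {set G}), #|S| = n -> exists r : G -> nat,
  [/\ {in S &, injective r}, (forall v, v \in S -> r v < n) &
      forall v, v \in S -> #|[set u in S | adj v u & r u < r v]| <= e].
  elim=> [|n IH] S hSn.
    exists (fun _ => 0); split.
    - by move=> x y; move/eqP: hSn; rewrite cards_eq0 => /eqP ->; rewrite inE.
    - by move=> v; move/eqP: hSn; rewrite cards_eq0 => /eqP ->; rewrite inE.
    - by move=> v; move/eqP: hSn; rewrite cards_eq0 => /eqP ->; rewrite inE.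
  have : S != set0 by rewrite -card_gt0 hSn.
  move=> /hS [v vS hv].
  have [r [rinj rlt rdeg]] : exists r : G -> nat,
  [/\ {in S :\ v &, injective r}, (forall w, w \in S :\ v -> r w < n) &
      forall w, w \in S :\ v -> #|[set u in S :\ v | adj w u & r u < r w]| <= e].
    by apply: IH; move: hSn; rewrite (cardsD1 v S) vS add1n => -[].
  exists (fun x => if x == v then n else r x); split.
  - move=> x y xS yS /=.
    case: (eqVneq x v) => [->|xv]; case: (eqVneq y v) => [->|yv] //.
    + move=> hn; have := rlt y; rewrite !inE yv yS => /(_ isT); by rewrite hn ltnn.
    + move=> hn; have := rlt x; rewrite !inE xv xS => /(_ isT); by rewrite hn ltnn.
    + by apply: rinj; rewrite !inE ?xv ?yv.
  - move=> w wS /=; case: (eqVneq w v) => // wv.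
    by apply: ltnW; apply: rlt; rewrite !inE wv.
  - move=> w wS /=; case: (eqVneq w v) => [->|wv].
      apply: leq_trans hv; apply: subset_leq_card; apply/subsetP => u.
      by rewrite !inE => /andP [-> /andP [-> _]].
    apply: leq_trans (rdeg w _); last by rewrite !inE wv.
    apply: subset_leq_card; apply/subsetP => u; rewrite !inE.
    case: (eqVneq u v) => [->|uv] /=.
      have := rlt w; rewrite !inE wv wS => /(_ isT) hw.
      by case/and3P => _ _; rewrite ltnNge (ltnW hw).
    by [].
have [r [rinj rlt rdeg]] := main _ [set: G] (cardsT G).
have hr : forall v, r v < #|G| by move=> v; apply: rlt; rewrite inE.
apply/existsP; exists [ffun v => Ordinal (hr v)]; apply/andP; split.
  apply/injectiveP => x y; rewrite !ffunE => -[] /rinj; apply; by rewrite inE.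
apply/forallP => v; apply: leq_trans (rdeg v (in_setT v)).
apply: subset_leq_card; apply/subsetP => u; rewrite !inE !ffunE /=.
by [].
Qed.

Lemma dense_sub e : ~~ degenerate_with G e ->
  exists2 S : {set G}, S != set0 &
     forall v, v \in S -> e < #|[set u in S | adj v u]|.
Proof.
move=> hn.
case: (boolP [exists S : {set G}, (S != set0) &&
     [forall v in S, e < #|[set u in S | adj v u]|]]).
  move=> /existsP [S /andP [hS /forall_inP hv]]; by exists S.
rewrite negb_exists => /forallP hall; case/negP: hn; apply: peel_order => S hS.
have := hall S; rewrite hS /= negb_forall => /existsP [v].
by rewrite negb_imply -leqNgt => /andP [vS hv]; exists v.
Qed.

End Basic.

Lemma Ktt0 (G : sgraph) : has_Ktt G 0.
Proof.
apply: (@Ktt_intro G 0 set0 set0); rewrite ?cards0 //.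
  by rewrite disjoints_subset sub0set.
by move=> a b; rewrite inE.
Qed.

Section Lower.
Variables (G : sgraph) (t k D m : nat) (S : {set G}).
Hypothesis noK : ~~ has_Ktt G t.
Hypothesis hm : k * (t - 1) < m.
Hypothesis hD : t + t * m + m <= D + 1.
Hypothesis hdeg : forall v, v \in S -> D <= #|[set u in S | adj v u]|.

Definition Low (p : G -> 'I_k) (F : rel 'I_k) : {set G} :=
  [set u in S | #|[set y in S | flip_adj p F u y]| < m].

Lemma low_part p F a : #|[set u in Low p F | p u == a]| <= t - 1.
Proof.
case: t noK hm hD => [|t']; first by rewrite Ktt0.
move=> noK' hm' hD'; rewrite subn1 /=.
rewrite leqNgt; apply/negP => hT.
have [T sT cT] := subset_card_eq hT.
have [u0 u0T] : exists u0, u0 \in T.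
  by apply/card_gt0P; rewrite cT.
pose U := [set y in S | F a (p y) || F (p y) a].
have hT' : forall u, u \in T -> [/\ u \in S, p u = a &
     #|[set y in S | flip_adj p F u y]| < m].
  move=> u uT; move/subsetP: sT => /(_ u uT); rewrite !inE => /andP [/andP [-> ->] /eqP ->].
  by [].
have hU : D <= m.-1 + #|U|.
  have [u0S pu0 hl] := hT' u0 u0T.
  apply: leq_trans (hdeg u0S) _.
  apply: leq_trans (_ : #|[set y in S | flip_adj p F u0 y] :|: U| <= _).
    apply: subset_leq_card; apply/subsetP => y; rewrite !inE.
    case/andP => yS ay; rewrite yS /=.
    have yu : u0 != y by apply: contraTneq ay => ->; rewrite adj_irr.
    rewrite /flip_adj yu ay /= pu0.
    by case: (F a (p y) || F (p y) a).
  apply: leq_trans (leq_card_setU _ _) _; rewrite leq_add2r.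
  by rewrite -ltnS; case: (m) hl => //.
pose C := [set y in U | (y \notin T) && [forall u in T, adj u y]].
have hC : #|U| <= #|C| + t'.+1 + t'.+1 * m.-1.
  apply: leq_trans (_ : #|C :|: T :|: \bigcup_(u in T) [set y in S | flip_adj p F u y]| <= _).
    apply: subset_leq_card; apply/subsetP => y yU.
    case: (boolP (y \in C)) => yC; first by rewrite !in_setU yC.
    case: (boolP (y \in T)) => yT; first by rewrite !in_setU yT orbT.
    rewrite !in_setU (negbTE yC) (negbTE yT) /=.
    have : ~~ [forall u in T, adj u y].
      by move: yC; rewrite inE yU yT.
    rewrite negb_forall => /existsP [u]; rewrite negb_imply => /andP [uT nau].
    apply/bigcupP; exists u => //; rewrite inE.
    move: yU; rewrite inE => /andP [-> hF] /=.
    have [_ pu _] := hT' u uT.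
    have yu : u != y by apply: contraNneq yT => <-.
    by rewrite /flip_adj yu (negbTE nau) pu hF.
  apply: leq_trans (leq_card_setU _ _) _.
  apply: leq_add.
    by apply: leq_trans (leq_card_setU _ _) _; rewrite cT.
  apply: leq_trans (card_bigcup_le _ _) _.
  apply: leq_trans (_ : \sum_(u in T) m.-1 <= _).
    apply: leq_sum => u uT; have [_ _ hl] := hT' u uT.
    by rewrite -ltnS; case: (m) hl.
  by rewrite sum_nat_const cT.
have m0 : 0 < m by apply: leq_ltn_trans hm'.
have e1 : m = m.-1.+1 by rewrite prednK.
have e2 : t'.+1 * m = t'.+1 * m.-1 + t'.+1 by rewrite {1}e1 mulnS addnC.
have hCt : t'.+1 <= #|C|.
  move: hD' hU hC; rewrite e2 {2 4}e1; set aa := t'.+1 * m.-1; lia.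
have [B sB cB] := subset_card_eq hCt.
case/negP: noK'; apply: (@Ktt_intro G _ T B cT cB).
  rewrite disjoint_sym disjoints_subset; apply/subsetP => y yB.
  by move/subsetP: sB => /(_ y yB); rewrite !inE => /andP [_ /andP [-> _]].
move=> u b uT bB; move/subsetP: sB => /(_ b bB); rewrite !inE.
by case/andP => _ /andP [_ /forall_inP]; apply.
Qed.

Lemma low_small p F : #|Low p F| < m.
Proof.
apply: leq_ltn_trans hm.
apply: leq_trans (_ : #|\bigcup_(a : 'I_k) [set u in Low p F | p u == a]| <= _).
  apply: subset_leq_card; apply/subsetP => u uL.
  by apply/bigcupP; exists (p u) => //; rewrite inE uL eqxx.
apply: leq_trans (card_bigcup_le _ _) _.
apply: leq_trans (_ : \sum_(a : 'I_k) (t - 1) <= _).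
  by apply: leq_sum => a _; apply: low_part.
by rewrite sum_nat_const card_ord.
Qed.

End Lower.

Lemma round_graph_ext (G : sgraph) k (s : fstrategy G k) (v v' : nat -> G) i :
  (forall j, j < i -> v j = v' j) -> round_graph s v i = round_graph s v' i.
Proof.
case: i => //= i hv.
have -> : mkseq v i.+1 = mkseq v' i.+1; last by [].
apply: (@eq_from_nth _ (v 0)); rewrite !size_mkseq // => j hj.
by rewrite !nth_mkseq // hv.
Qed.

Section Runner.
Variables (G : sgraph) (t k D m : nat) (S : {set G}).
Hypothesis noK : ~~ has_Ktt G t.
Hypothesis hm : k * (t - 1) < m.
Hypothesis hD : t + t * m + m <= D + 1.
Hypothesis hdeg : forall v, v \in S -> D <= #|[set u in S | adj v u]|.
Variable v0 : G.
Hypothesis v0S : v0 \in S.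
Variable s : fstrategy G k.

Let RG (h : seq G) i := round_graph s (fun j => nth v0 h j) i.
Let good (h : seq G) (w : G) :=
  (w \in S) && RG h (size h).-1 (last v0 h) w &&
  (m <= #|[set y in S | RG h (size h) w y]|).
Let next (h : seq G) : G := odflt (last v0 h) [pick w | good h w].
Fixpoint hist (n : nat) : seq G :=
  if n is n'.+1 then rcons (hist n') (next (hist n')) else [:: v0].
Let vv j := nth v0 (hist j) j.

Lemma size_hist n : size (hist n) = n.+1.
Proof. by elim: n => //= n IH; rewrite size_rcons IH. Qed.

Lemma hist_prefix n j : j <= n -> nth v0 (hist n) j = vv j.
Proof.
elim: n => [|n IH]; first by rewrite leqn0 => /eqP ->.
rewrite leq_eqVlt => /orP [/eqP ->|hj]; first by [].
by rewrite /= nth_rcons size_hist hj IH.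
Qed.

Lemma RG_hist n i : i <= n.+1 -> RG (hist n) i = round_graph s vv i.
Proof.
move=> hi; apply: round_graph_ext => j hj.
by apply: hist_prefix; rewrite -ltnS; apply: leq_trans hi.
Qed.

Lemma last_hist n : last v0 (hist n) = vv n.
Proof. by rewrite -nth_last size_hist /= hist_prefix. Qed.

Lemma vv_succ n : vv n.+1 = next (hist n).
Proof. by rewrite /vv /= nth_rcons size_hist ltnn eqxx. Qed.

Lemma runner_inv n : vv n \in S /\
  m <= #|[set y in S | round_graph s vv n (vv n) y]|.
Proof.
elim: n => [|n [vS hn]].
  have -> : vv 0 = v0 by [].
  split => //; apply: leq_trans (_ : m <= D) (hdeg v0S).
  have t0 : 0 < t by case: (t) noK => //; rewrite Ktt0.
  have := leq_pmull m t0; lia.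
pose X := [set y in S | round_graph s vv n (vv n) y].
pose L := Low m S (s (mkseq vv n.+1)).1 (s (mkseq vv n.+1)).2.
have [w wX wL] : exists2 w, w \in X & w \notin L.
  case: (boolP (X \subset L)) => [sub|].
    have := leq_trans hn (subset_leq_card sub).
    by rewrite leqNgt (low_small noK hm hD hdeg).
  by case/subsetPn => w; exists w.
have gw : good (hist n) w.
  move: wX wL; rewrite /good /L /Low !inE size_hist succnK last_hist.
  rewrite (RG_hist (leqnSn _)) (RG_hist (leqnn _)) /=.
  by case/andP => -> -> /=; rewrite -leqNgt.
rewrite vv_succ /next; case: pickP => [w' gw'|/(_ w)]; last by rewrite gw.
move: gw'; rewrite /good size_hist succnK last_hist (RG_hist (leqnSn _)) (RG_hist (leqnn _)).
by case/andP => /andP [-> _].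
Qed.

Lemma runner_wins : ~ (exists s' : fstrategy G k, s' = s /\ forall v : nat -> G,
    (forall i, v i.+1 = v i \/ round_graph s v i (v i) (v i.+1)) ->
    exists i, 0 < i /\ isolated (round_graph s v i) (v i)).
Proof.
move=> [_ [_ hw]].
have legal : forall i, vv i.+1 = vv i \/ round_graph s vv i (vv i) (vv i.+1).
  move=> i; right; rewrite vv_succ /next.
  case: pickP => [w' gw'|hnone].
    move: gw'; rewrite /good size_hist succnK last_hist (RG_hist (leqnSn _)).
    by case/andP => /andP [_ ->].
  have [_ hi] := runner_inv i.
  pose X := [set y in S | round_graph s vv i (vv i) y].
  pose L := Low m S (s (mkseq vv i.+1)).1 (s (mkseq vv i.+1)).2.
  have [w wX wL] : exists2 w, w \in X & w \notin L.
    case: (boolP (X \subset L)) => [sub|].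
      have := leq_trans hi (subset_leq_card sub).
      by rewrite leqNgt (low_small noK hm hD hdeg).
    by case/subsetPn => w; exists w.
  have := hnone w; rewrite /good.
  move: wX wL; rewrite /L /Low !inE size_hist succnK last_hist.
  rewrite (RG_hist (leqnSn _)) (RG_hist (leqnn _)) /=.
  by case/andP => -> -> /=; rewrite -leqNgt => ->.
have [i [i0 iso]] := hw vv legal.
have [_ hi] := runner_inv i.
have m0 : 0 < m by apply: leq_ltn_trans hm.
have : 0 < #|[set y in S | round_graph s vv i (vv i) y]| by apply: leq_trans hi.
case/card_gt0P => y; rewrite inE => /andP [_ hy].
by move: (iso y); rewrite hy.
Qed.

End Runner.

Section Iso.
Variables (G : sgraph) (k : nat) (S : {set G}) (p : G -> 'I_k).

Definition Fof : rel 'I_k := fun c c' =>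
  [exists s0, (s0 \in S) && (p s0 == c) && [exists y, (p y == c') && adj s0 y]].

Definition goodp :=
  [forall s0 in S, forall y, (p y == p s0) ==> (y == s0)] &&
  [forall y, forall y', ((y \notin S) && (y' \notin S) && (p y == p y')) ==>
      [forall s0 in S, adj y s0 == adj y' s0]].

Hypothesis gp : goodp.

Lemma gp1 s0 y : s0 \in S -> p y = p s0 -> y = s0.
Proof.
move: gp => /andP [/forall_inP h _] sS e.
by move/forallP: (h s0 sS) => /(_ y); rewrite e eqxx => /eqP.
Qed.

Lemma gp2 y y' s0 : y \notin S -> y' \notin S -> p y = p y' -> s0 \in S ->
  adj y s0 = adj y' s0.
Proof.
move: gp => /andP [_ /forallP h] yS y'S e sS.
move/forallP: (h y) => /(_ y'); rewrite yS y'S e eqxx /=.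
by move/forall_inP => /(_ s0 sS) /eqP.
Qed.

Lemma Fof_nonS y c : y \notin S -> Fof (p y) c = false.
Proof.
move=> yS; apply/existsP => -[s0 /andP [/andP [sS /eqP e] _]].
by move: yS; rewrite (gp1 sS (esym e)) sS.
Qed.

Lemma Fof_S1 s0 z : s0 \in S -> z != s0 -> Fof (p s0) (p z) = adj s0 z.
Proof.
move=> sS zs.
apply/existsP/idP.
  case=> s1 /andP [/andP [s1S /eqP e1] /existsP [y /andP [/eqP ey ay]]].
  have s10 := gp1 sS e1; subst s1.
  case: (boolP (y \in S)) => yS.
    by have := gp1 yS (esym ey) => ez; subst z.
  case: (boolP (z \in S)) => zS.
    by have := gp1 zS ey => eyz; subst y.
  by rewrite adj_sym -(gp2 yS zS ey sS) adj_sym.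
move=> az; exists s0; rewrite sS eqxx /=; apply/existsP; exists z.
by rewrite eqxx az.
Qed.

Lemma Fof_S s0 z : s0 \in S -> z != s0 ->
  Fof (p s0) (p z) || Fof (p z) (p s0) = adj s0 z.
Proof.
move=> sS zs; rewrite Fof_S1 //.
case: (boolP (z \in S)) => zS.
  by rewrite Fof_S1 1?eq_sym // adj_sym orbb.
by rewrite Fof_nonS // orbF.
Qed.

Lemma flip_S x y : (x \in S) || (y \in S) -> flip_adj p Fof x y = false.
Proof.
rewrite /flip_adj.
case: (eqVneq x y) => [//|xy] /= /orP [xS|yS].
  by rewrite Fof_S 1?eq_sym // addbb.
by rewrite orbC Fof_S // adj_sym addbb.
Qed.

Lemma flip_sub x y : flip_adj p Fof x y -> adj x y.
Proof.
case: (boolP ((x \in S) || (y \in S))) => [/flip_S -> //|].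
rewrite negb_or => /andP [xS yS].
by rewrite /flip_adj !Fof_nonS // addbF => /andP [].
Qed.

End Iso.

Section Code.
Variables (G : sgraph) (t d : nat) (S : {set G}).
Hypothesis t1 : 1 < t.
Hypothesis noK : ~~ has_Ktt G t.
Hypothesis Sd : #|S| <= d.

Let t0 : 0 < t. Proof. by apply: ltnW. Qed.
Let j0 : 'I_t := Ordinal t0.
Let j1 : 'I_t := Ordinal t1.

Definition idx (s : G) : 'I_d.+1 := inord (index s (enum S)).+1.

Lemma idx_val s : s \in S -> (idx s : nat) = (index s (enum S)).+1.
Proof.
move=> sS; rewrite /idx inordK // ltnS.
apply: leq_trans Sd; rewrite cardE index_mem mem_enum //.
Qed.

Lemma idx_neq0 s : s \in S -> idx s != ord0.
Proof. by move=> sS; apply/eqP => /(congr1 val); rewrite /= idx_val. Qed.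

Lemma idx_inj s s' : s \in S -> s' \in S -> idx s = idx s' -> s = s'.
Proof.
move=> sS s'S /(congr1 val); rewrite /= !idx_val // => -[e].
have h1 : nth s (enum S) (index s (enum S)) = s by apply: nth_index; rewrite mem_enum.
have h2 : nth s (enum S) (index s' (enum S)) = s' by apply: nth_index; rewrite mem_enum.
by rewrite -h1 e h2.
Qed.

Definition L (y : G) : seq G := [seq s <- enum S | adj y s].

Lemma L_mem y s : (s \in L y) = (s \in S) && adj y s.
Proof. by rewrite mem_filter mem_enum andbC. Qed.

Lemma L_uniq y : uniq (L y).
Proof. by apply: filter_uniq; apply: enum_uniq. Qed.

Definition K (y : G) : {set G} := [set s in take t (L y)].

Lemma K_mem y s : s \in K y -> (s \in S) && adj y s.
Proof. by rewrite inE => /mem_take; rewrite L_mem. Qed.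

Lemma card_K y : t <= size (L y) -> #|K y| = t.
Proof.
move=> hy; rewrite /K cardsE; move/card_uniqP: (take_uniq t (L_uniq y)) => ->.
by rewrite size_take; case: ltngtP hy.
Qed.

Definition B (y : G) : {set G} :=
  [set z | (z \notin S) && (t <= size (L z)) && (K z == K y)].

Lemma B_small y : #|B y| < t.
Proof.
rewrite ltnNge; apply/negP => hB.
have [Y sY cY] := subset_card_eq hB.
have [z zY] : exists z, z \in Y by apply/card_gt0P; rewrite cY.
have : z \in B y by apply: (subsetP sY).
rewrite inE => /andP [/andP [zS zt] /eqP Kz].
case/negP: noK; apply: (@Ktt_intro G t (K y) Y) => //.
- by rewrite -Kz card_K.
- rewrite disjoint_sym disjoints_subset; apply/subsetP => b bY.
  move: (subsetP sY b bY); rewrite !inE => /andP [/andP [bS _] _].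
  apply/negP => /mem_take; rewrite L_mem => /andP [bS' _].
  by rewrite bS' in bS.
- move=> a b aK bY; move: (subsetP sY b bY); rewrite inE.
  case/andP => _ /eqP Kb; move: aK; rewrite -Kb => /K_mem /andP [_].
  by rewrite adj_sym.
Qed.

Definition rho (y : G) : nat := index y (enum (B y)).
Definition A (y : G) : seq G := enum (K y).

Lemma rho_lt y : y \notin S -> t <= size (L y) -> rho y < t.
Proof.
move=> yS yt; apply: (ltn_trans _ (B_small y)).
by rewrite cardE /rho index_mem mem_enum inE yS yt eqxx.
Qed.

Lemma size_A y : t <= size (L y) -> size (A y) = t.
Proof. by move=> yt; rewrite /A -cardE card_K. Qed.

Definition code (y : G) : {ffun 'I_t -> 'I_d.+1} :=
  if y \in S then [ffun j : 'I_t => if (j : nat) == 1 then idx y else ord0]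
  else if size (L y) < t then
    [ffun j : 'I_t => if (j : nat) < size (L y) then idx (nth y (L y) j) else ord0]
  else [ffun j : 'I_t => idx (nth y (A y) ((j + rho y) %% t))].

Lemma code_big_nz y j : y \notin S -> t <= size (L y) -> code y j != ord0.
Proof.
move=> yS yt; rewrite /code (negbTE yS) ltnNge yt /= ffunE.
apply: idx_neq0.
have : nth y (A y) ((j + rho y) %% t) \in A y.
  by apply: mem_nth; rewrite size_A // ltn_pmod.
by rewrite /A mem_enum => /K_mem /andP [].
Qed.

Lemma code_small y (j : 'I_t) : y \notin S -> size (L y) < t ->
  code y j = if (j : nat) < size (L y) then idx (nth y (L y) j) else ord0.
Proof. by move=> yS yt; rewrite /code (negbTE yS) yt ffunE. Qed.

Lemma nthL_S y j : j < size (L y) -> nth y (L y) j \in S.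
Proof. by move=> hj; have := mem_nth y hj; rewrite L_mem => /andP []. Qed.

Lemma code_K y s : y \notin S -> t <= size (L y) -> s \in K y ->
  exists j, code y j = idx s.
Proof.
move=> yS yt sK.
have r_lt := rho_lt yS yt.
pose i := index s (A y).
have hi : i < t by rewrite -(size_A yt) index_mem /A mem_enum.
exists (Ordinal (ltn_pmod (i + (t - rho y)) t0)).
rewrite /code (negbTE yS) ltnNge yt /= ffunE /=.
congr idx.
have -> : (i + (t - rho y)) %% t + rho y = i + (t - rho y) + rho y %[mod t]
  by rewrite modnDml.
rewrite -addnA subnK ?(ltnW r_lt) // modnDr modn_small //.
by rewrite /i nth_index // /A mem_enum.
Qed.

Lemma code_P1 s y : s \in S -> code y = code s -> y = s.
Proof.
move=> sS e.
have c0 : code y j0 = ord0 by rewrite e /code sS ffunE.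
have c1 : code y j1 = idx s by rewrite e /code sS ffunE.
case: (boolP (y \in S)) => yS.
  by apply: idx_inj => //; rewrite -c1 /code yS ffunE.
case: (ltnP (size (L y)) t) => yt.
  move: c0; rewrite code_small //=.
  case: ltnP => h0.
    by move=> /eqP; rewrite (negbTE (idx_neq0 (nthL_S h0))).
  move: c1; rewrite code_small //=.
  have -> : size (L y) = 0 by case: (size (L y)) h0.
  by move=> /esym /eqP; rewrite (negbTE (idx_neq0 sS)).
by move: (code_big_nz j0 yS yt); rewrite c0.
Qed.

Lemma code_P2 y y' : y \notin S -> y' \notin S -> code y = code y' ->
  forall s0, s0 \in S -> adj y s0 = adj y' s0.
Proof.
move=> yS y'S e.
have ej : forall j, code y j = code y' j by move=> j; rewrite e.
suff : L y = L y' \/ y = y'.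
  case=> [hL|-> //] s0 s0S.
  by have := L_mem y s0; have := L_mem y' s0; rewrite -hL s0S /= => -> ->.
case: (ltnP (size (L y)) t) => yt; case: (ltnP (size (L y')) t) => y't.
- left.
  have hsz : size (L y) = size (L y').
    case: (ltngtP (size (L y)) (size (L y'))) => // h.
      have hj : size (L y) < t by [].
      have := ej (Ordinal hj).
      rewrite code_small // code_small //= ltnn h.
      by move=> /esym /eqP; rewrite (negbTE (idx_neq0 (nthL_S h))).
    have hj : size (L y') < t by [].
    have := ej (Ordinal hj).
    rewrite code_small // code_small //= ltnn h.
    by move=> /eqP; rewrite (negbTE (idx_neq0 (nthL_S h))).
  apply: (@eq_from_nth _ y _ _ hsz) => j hj.
  have hjt : j < t := ltn_trans hj yt.
  have := ej (Ordinal hjt).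
  rewrite code_small // code_small //= hj -hsz hj.
  move=> e2.
  have a1 := nthL_S hj.
  have a2 : nth y' (L y') j \in S by apply: nthL_S; rewrite -hsz.
  rewrite (idx_inj a1 a2 e2).
  by rewrite (set_nth_default y y') // -hsz.
- have := ej (Ordinal yt).
  rewrite code_small //= ltnn => /esym /eqP.
  by rewrite (negbTE (code_big_nz _ y'S y't)).
- have := ej (Ordinal y't).
  rewrite [code y' _]code_small //= ltnn => /eqP.
  by rewrite (negbTE (code_big_nz _ yS yt)).
right.
have sub : forall z z', z \notin S -> z' \notin S -> t <= size (L z) ->
    t <= size (L z') -> code z = code z' -> K z \subset K z'.
  move=> z z' zS z'S zt z't ez; apply/subsetP => s sK.
  have [j hj] := code_K zS zt sK.
  move: hj; rewrite ez /code (negbTE z'S) ltnNge z't /= ffunE.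
  have hm : nth z' (A z') ((j + rho z') %% t) \in A z'.
    by apply: mem_nth; rewrite size_A // ltn_pmod.
  have sS : s \in S by move: (K_mem sK) => /andP [].
  move=> /idx_inj; rewrite -/(A z').
  move: (hm); rewrite /A mem_enum => /K_mem /andP [hS _].
  by move=> /(_ hS sS) <-; rewrite -/(A z') -(mem_enum (mem (K z'))).
have eK : K y = K y'.
  by apply/eqP; rewrite eqEsubset !sub.
have eB : B y = B y' by rewrite /B eK.
have eA : A y = A y' by rewrite /A eK.
have := ej j0.
rewrite /code (negbTE yS) (negbTE y'S) !ltnNge yt y't /= !ffunE /= !add0n.
have r1 := rho_lt yS yt; have r2 := rho_lt y'S y't.
rewrite !modn_small //.
have n1 : nth y (A y) (rho y) \in S.
  have : nth y (A y) (rho y) \in A y by apply: mem_nth; rewrite size_A.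
  by rewrite /A mem_enum => /K_mem /andP [].
have n2 : nth y' (A y') (rho y') \in S.
  have : nth y' (A y') (rho y') \in A y' by apply: mem_nth; rewrite size_A.
  by rewrite /A mem_enum => /K_mem /andP [].
move=> /(idx_inj n1 n2).
rewrite -eA (set_nth_default y y') ?size_A //.
move/eqP; rewrite nth_uniq ?size_A ?enum_uniq // => /eqP er.
have yB : y \in B y by rewrite inE yS yt eqxx.
have y'B : y' \in B y' by rewrite inE y'S y't eqxx.
rewrite -(nth_index y (s := enum (B y)) (x := y)) ?mem_enum //.
rewrite -/(rho y) er /rho -eB nth_index // mem_enum eB //.
Qed.

Lemma code_exists : exists p : {ffun G -> 'I_(d.+1 ^ t)}, goodp S p.
Proof.
have E : #|{ffun 'I_t -> 'I_d.+1}| = d.+1 ^ t by rewrite card_ffun !card_ord.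
exists [ffun y => cast_ord E (enum_rank (code y))].
have pe : forall y y', [ffun y => cast_ord E (enum_rank (code y))] y =
    [ffun y => cast_ord E (enum_rank (code y))] y' -> code y = code y'.
  by move=> y y'; rewrite !ffunE => /cast_ord_inj /enum_rank_inj.
apply/andP; split.
  apply/forall_inP => s0 sS; apply/forallP => y; apply/implyP => /eqP /pe.
  by move/(code_P1 sS) => ->.
apply/forallP => y; apply/forallP => y'; apply/implyP.
case/andP => /andP [yS y'S] /eqP /pe e; apply/forall_inP => s0 sS.
by rewrite (code_P2 yS y'S e sS).
Qed.

End Code.

Section Upper.
Variables (G : sgraph) (t d : nat) (f : {ffun G -> 'I_#|G|}).
Hypothesis finj : injective f.
Let Up (v : G) : {set G} := [set u | adj v u & f u < f v].
Hypothesis hdeg : forall v, #|Up v| <= d.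
Hypothesis t1 : 1 < t.
Hypothesis noK : ~~ has_Ktt G t.
Hypothesis d0 : 0 < d.
Variable x0 : G.

Let k := d.+1 ^ t.
Let kpos : 0 < k. Proof. by rewrite expn_gt0. Qed.

Definition Sset (h : seq G) : {set G} :=
  let n := size h in let u := nth x0 h n.-1 in let w := nth x0 h n.-2 in
  if (1 < n) && (w \in Up u) then u |: (Up u :\ w) else [set u].

Lemma card_Sset h : #|Sset h| <= d.
Proof.
rewrite /Sset; case: ifP => [/andP [_ wU]|_]; last by rewrite cards1.
apply: leq_trans (leq_card_setU _ _) _; rewrite cards1.
have := hdeg (nth x0 h (size h).-1); rewrite (cardsD1 (nth x0 h (size h).-2)) wU.
by rewrite add1n.
Qed.

Let pdef : {ffun G -> 'I_k} := [ffun _ => Ordinal kpos].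

Definition strat : fstrategy G k := fun h =>
  let S := Sset h in
  let p := odflt pdef [pick p : {ffun G -> 'I_k} | goodp S p] in
  (fun y => p y, Fof S (fun y => p y)).

Lemma strat_good h : goodp (Sset h) (strat h).1 /\
  (strat h).2 = Fof (Sset h) (strat h).1.
Proof.
rewrite /strat /=; case: pickP => [p gp|none] //=.
have [p gp] := code_exists t1 noK (card_Sset h).
by move: (none p); rewrite gp.
Qed.

Lemma strat_S h x y : (x \in Sset h) || (y \in Sset h) ->
  flip_adj (strat h).1 (strat h).2 x y = false.
Proof. by case: (strat_good h) => gp ->; apply: flip_S. Qed.

Lemma strat_sub h x y : flip_adj (strat h).1 (strat h).2 x y -> adj x y.
Proof. by case: (strat_good h) => gp ->; apply: flip_sub. Qed.

Lemma Sset_mk (v : nat -> G) i : Sset (mkseq v i.+1) =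
  if (0 < i) && (v i.-1 \in Up (v i)) then v i |: (Up (v i) :\ v i.-1)
  else [set v i].
Proof.
rewrite /Sset size_mkseq succnK (nth_mkseq _ _ (ltnSn i)).
case: i => [//|i]; rewrite succnK (nth_mkseq _ _ (ltnW (ltnSn i.+1))).
by [].
Qed.

Lemma in_Sset_mk (v : nat -> G) i : v i \in Sset (mkseq v i.+1).
Proof. by rewrite Sset_mk; case: ifP => _; rewrite !inE eqxx. Qed.


Lemma strat_wins : flipper_wins G k.
Proof.
exists strat => v legal.
apply: NNPP => hno.
have noiso : forall i, 0 < i -> ~ isolated (round_graph strat v i) (v i).
  by move=> i i0 iso; apply: hno; exists i.
have notS : forall i, v i.+1 \notin Sset (mkseq v i.+1).
  move=> i; apply/negP => hS; apply: (noiso i.+1) => // y /=.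
  by rewrite strat_S // hS.
have edge : forall i, round_graph strat v i (v i) (v i.+1).
  move=> i; case: (legal i) => // e.
  by have := notS i; rewrite e in_Sset_mk.
have adjs : forall i, adj (v i) (v i.+1).
  move=> i; have := edge i; case: i => [//|i] /=; apply: strat_sub.
have notprev : forall i, v i.+2 != v i.
  move=> i; apply/eqP => e; have := edge i.+1; rewrite /= e strat_S //.
  by rewrite in_Sset_mk orbT.
have neqf : forall i, f (v i) != f (v i.+1).
  move=> i; apply/eqP => /finj e; have := adjs i; by rewrite e adj_irr.
pose dn i := (f (v i) < f (v i.+1)).
have dn_next : forall i, dn i -> dn i.+1.
  move=> i; rewrite /dn => hd; rewrite ltnNge; apply/negP => hle.
  have hlt : f (v i.+2) < f (v i.+1).
    by rewrite ltn_neqAle hle andbT eq_sym neqf.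
  have hU : v i \in Up (v i.+1).
    by rewrite inE hd andbT (@adj_sym G (v i.+1) (v i)) adjs.
  have := notS i.+1; rewrite Sset_mk /= hU /= !inE.
  by rewrite (notprev i) adjs hlt orbT.
pose n := #|G|.
pose P i := if dn i then n - f (v i.+1) else n + f (v i.+1).
have Pdec : forall i, P i.+1 < P i.
  move=> i; rewrite /P.
  have b1 : f (v i.+1) < n by apply: ltn_ord.
  have b2 : f (v i.+2) < n by apply: ltn_ord.
  case: (boolP (dn i)) => hd.
    rewrite (dn_next _ hd); move: hd; rewrite /dn => hd.
    have := dn_next _ hd; rewrite /dn; lia.
  case: (boolP (dn i.+1)); rewrite /dn; last first.
    move=> h1; have h2 : (f (v i.+1) : nat) != f (v i.+2) := neqf i.+1; move: h1 h2; lia.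
  move: hd; rewrite /dn; lia.
have : forall i, P i + i <= P 0.
  elim=> [|i IH]; first by rewrite addn0.
  by apply: leq_trans IH; rewrite addnS ltn_add2r; apply: Pdec.
by move=> /(_ (P 0).+1); rewrite addnS ltnNge leq_addl.
Qed.

End Upper.

Section Final.
Variable G : sgraph.

Lemma deg0_edgeless : degenerate_with G 0 -> forall x y : G, ~~ adj x y.
Proof.
move=> /existsP [f /andP [/injectiveP finj /forallP hf]] x y; apply/negP => axy.
have nxy : f x != f y by apply/eqP => /finj e; move: axy; rewrite e adj_irr.
case: (ltngtP (f x) (f y)) => h.
- have := hf y; rewrite leqn0 cards_eq0 => /eqP /setP /(_ x).
  by rewrite !inE adj_sym axy h.
- have := hf x; rewrite leqn0 cards_eq0 => /eqP /setP /(_ y).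
  by rewrite !inE axy h.
- by move: nxy; rewrite (val_inj h) eqxx.
Qed.

Lemma edgeless_deg0 : (forall x y : G, ~~ adj x y) -> degeneracy G = 0.
Proof.
move=> he; apply/eqP; rewrite -leqn0; apply: (proj2 (deg_spec G)).
apply/existsP; exists [ffun x => enum_rank x]; apply/andP; split.
  by apply/injectiveP => x y; rewrite !ffunE => /enum_rank_inj.
apply/forallP => v; rewrite leqn0 cards_eq0; apply/eqP/setP => u.
by rewrite !inE (negbTE (he v u)).
Qed.

Lemma noK1_edgeless : ~~ has_Ktt G 1 -> forall x y : G, ~~ adj x y.
Proof.
move=> noK x y; apply/negP => axy; case/negP: noK.
apply: (@Ktt_intro G 1 [set x] [set y]); rewrite ?cards1 //.
  rewrite disjoints1 inE; apply/eqP => e; move: axy; rewrite e adj_irr //.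
by move=> a b; rewrite !inE => /eqP -> /eqP ->.
Qed.

Lemma edgeless_fw : (forall x y : G, ~~ adj x y) -> flipper_wins G 1.
Proof.
move=> he; exists (fun _ => (fun _ => ord0, fun _ _ => false)) => v _.
exists 1; split => // y /=.
by rewrite /flip_adj (negbTE (he _ _)) andbF.
Qed.

Lemma upper t : 0 < #|G| -> ~~ has_Ktt G t -> fw1 G <= (degeneracy G + 1) ^ t.
Proof.
move=> G0 noK.
have [dw _] := deg_spec G.
case: (posnP (degeneracy G)) => [d0|d0].
  rewrite d0 add0n exp1n; apply: (proj2 (fw1_spec G)); apply: edgeless_fw.
  by apply: deg0_edgeless; rewrite -d0.
case: t noK => [|[|t]] noK.
- by rewrite Ktt0 in noK.
- by move: d0; rewrite edgeless_deg0 //; apply: noK1_edgeless.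
move: dw => /existsP [f /andP [/injectiveP finj /forallP hf]].
have [x0 _] := card_gt0P G0.
apply: (proj2 (fw1_spec G)); rewrite addn1.
by apply: (strat_wins finj hf _ noK d0 x0).
Qed.

Lemma lower t : 0 < #|G| -> ~~ has_Ktt G t -> degeneracy G < 2 * t ^ 2 * fw1 G.
Proof.
move=> G0 noK.
have k0 := fw1_gt0 G0.
have t0 : 0 < t by case: (t) noK => //; rewrite Ktt0.
set k := fw1 G; set D := degeneracy G.
rewrite ltnNge; apply/negP => hD.
have D0 : 0 < D.
  apply: leq_trans hD; rewrite !muln_gt0 k0 andbT; by case: (t) t0.
have nd : ~~ degenerate_with G D.-1.
  apply/negP => /(proj2 (deg_spec G)) h.
  rewrite -/D in h; lia.
have [S S0 hS] := dense_sub nd.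
have [v0 v0S] : exists v0, v0 \in S by apply/set0Pn.
have hdeg : forall v, v \in S -> D <= #|[set u in S | adj v u]|.
  by move=> v vS; have := hS v vS; case: (D) D0.
have [s hw] := proj1 (fw1_spec G).
pose m := k * (t - 1) + 1.
have hm : k * (t - 1) < m by rewrite /m addn1.
have hD' : t + t * m + m <= D + 1.
  move: hD; rewrite /m; case: (t) t0 => // t' _; rewrite subSS subn0.
  move=> hD; apply: leq_trans (_ : 2 * t'.+1 ^ 2 * k + 1 <= _); last by rewrite leq_add2r.
  nia.
apply: (runner_wins noK hm hD' hdeg v0S (s := s)).
by exists s; split.
Qed.

End Final.


Section Rat.
Import GRing.Theory Num.Theory.

Lemma part1_lem (G : sgraph) (t : nat) : (0 < #|G|)%N -> ~~ has_Ktt G t ->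
     ((degeneracy G)%:R / (2 * t ^ 2)%:R < (fw1 G)%:R :> rat)%R
     /\ (fw1 G <= (degeneracy G + 1) ^ t)%N.
Proof.
move=> G0 noK; split; last exact: upper.
have t0 : (0 < t)%N by case: (t) noK => //; rewrite Ktt0.
have p0 : (0 < 2 * t ^ 2)%N by rewrite muln_gt0 expn_gt0 t0.
rewrite ltr_pdivrMr ?ltr0n // -natrM ltr_nat mulnC.
exact: lower.
Qed.

End Rat.

Lemma part2_lem (C : sgraph -> Prop) : weakly_sparse C ->
     (bounded_fw1 C <-> bounded_degeneracy C).
Proof.
move=> [t ht]; split.
- move=> [K hK]; exists (2 * t ^ 2 * K) => G CG.
  case: (posnP #|G|) => [e|G0].
    by have := deg_le_card G; rewrite e leqn0 => /eqP ->.
  apply: ltnW; apply: (leq_trans (lower G0 (ht G CG))).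
  by apply: leq_mul => //; apply: hK.
- move=> [d hd]; exists ((d + 1) ^ t) => G CG.
  case: (posnP #|G|) => [e|G0].
    by have := fw1_le_card G; rewrite e leqn0 => /eqP ->.
  apply: leq_trans (upper G0 (ht G CG)) _.
  have t0 : 0 < t by case: (t) (ht G CG) => //; rewrite Ktt0.
  by rewrite leq_exp2r // leq_add2r; apply: hd.
Qed.

Local Open Scope ring_scope.

Theorem mainTheorem7 :
  (forall (G : sgraph) (t : nat), (0 < #|G|)%N -> ~~ has_Ktt G t ->
     (degeneracy G)%:R / (2 * t ^ 2)%:R < (fw1 G)%:R :> rat
     /\ (fw1 G <= (degeneracy G + 1) ^ t)%N)
  /\
  (forall C : sgraph -> Prop, weakly_sparse C ->
     (bounded_fw1 C <-> bounded_degeneracy C)).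
Proof.
split; [exact: part1_lem | exact: part2_lem].
Qed.
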